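(* Let $X,Y,Z$ be Banach spaces and $T:X\oplus_\infty Y\to Z$ a Lipschitz map with $T(0)=0$. Then for every $\varepsilon>0$ there exist $u=(x_1,y_1)$, $v=(x_2,y_2)\in X\oplus_\infty Y$ with $u\ne v$ and $\|u-v\|=\|x_1-x_2\|$ such that $\|Tu-Tv\|\ge(\|T\|_L-\varepsilon)\|u-v\|$.
   Context: $X\oplus_\infty Y$ is $X\times Y$ with norm $\|(x,y)\|=\max\{\|x\|,\|y\|\}$. $\|T\|_L=\sup\{\|Tu-Tv\|/\|u-v\|: u\neq v\}$. *)

(* Defs.v *)
From Stdlib Require Import Reals.
Open Scope R_scope.

Record Banach := {
  bcar :> Type;
  vzero : bcar;
  vadd : bcar -> bcar -> bcar;
  vopp : bcar -> bcar;
  vscal : R -> bcar -> bcar;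
  vnorm : bcar -> R;
  vadd_assoc : forall x y z, vadd x (vadd y z) = vadd (vadd x y) z;
  vadd_comm : forall x y, vadd x y = vadd y x;
  vadd_0 : forall x, vadd x vzero = x;
  vadd_opp : forall x, vadd x (vopp x) = vzero;
  vscal_1 : forall x, vscal 1 x = x;
  vscal_assoc : forall a b x, vscal a (vscal b x) = vscal (a * b) x;
  vscal_distr_v : forall a x y, vscal a (vadd x y) = vadd (vscal a x) (vscal a y);
  vscal_distr_s : forall a b x, vscal (a + b) x = vadd (vscal a x) (vscal b x);
  vnorm_eq0 : forall x, vnorm x = 0 -> x = vzero;
  vnorm_scal : forall a x, vnorm (vscal a x) = Rabs a * vnorm x;
  vnorm_triangle : forall x y, vnorm (vadd x y) <= vnorm x + vnorm y;
  vcomplete : forall u : nat -> bcar,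
    (forall eps, 0 < eps -> exists N, forall m n, (N <= m)%nat -> (N <= n)%nat ->
        vnorm (vadd (u m) (vopp (u n))) < eps) ->
    exists l, forall eps, 0 < eps -> exists N, forall n, (N <= n)%nat ->
        vnorm (vadd (u n) (vopp l)) < eps
}.

Arguments vzero {_}.
Arguments vadd {_} _ _.
Arguments vopp {_} _.
Arguments vscal {_} _ _.
Arguments vnorm {_} _.

Definition vdist {E : Banach} (x y : E) : R := vnorm (vadd x (vopp y)).

Definition sum_inf_dist {X Y : Banach} (u v : X * Y) : R :=
  Rmax (vdist (fst u) (fst v)) (vdist (snd u) (snd v)).

Definition sum_inf_zero {X Y : Banach} : X * Y := (vzero, vzero).

Definition lipschitz {X Y Z : Banach} (T : X * Y -> Z) : Prop :=
  exists K, forall u v, vdist (T u) (T v) <= K * sum_inf_dist u v.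

Definition lip_norm_is {X Y Z : Banach} (T : X * Y -> Z) (L : R) : Prop :=
  is_lub (fun r => exists u v, u <> v /\ r = vdist (T u) (T v) / sum_inf_dist u v) L.

(* Main.v *)
Require Import Defs.
From Stdlib Require Import Reals.
From Stdlib Require Import Lra Classical.
Open Scope R_scope.

Lemma add0l (E : Banach) (x : E) : vadd vzero x = x.
Proof. rewrite vadd_comm; apply vadd_0. Qed.

Lemma oppl (E : Banach) (x : E) : vadd (vopp x) x = vzero.
Proof. rewrite vadd_comm; apply vadd_opp. Qed.

Lemma vcancel (E : Banach) (x y z : E) : vadd x y = vadd x z -> y = z.
Proof.
  intro H. rewrite <- (add0l E y), <- (add0l E z), <- (oppl E x), <- !vadd_assoc, H.
  reflexivity.
Qed.

Lemma scal0 (E : Banach) (x : E) : vscal 0 x = vzero.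
Proof.
  apply (vcancel E (vscal 0 x)). rewrite vadd_0, <- vscal_distr_s, Rplus_0_l.
  reflexivity.
Qed.

Lemma opp_scal (E : Banach) (x : E) : vopp x = vscal (-1) x.
Proof.
  apply (vcancel E x). rewrite vadd_opp.
  transitivity (vadd (vscal 1 x) (vscal (-1) x)).
  - rewrite <- vscal_distr_s. replace (1 + -1) with 0 by ring. symmetry; apply scal0.
  - rewrite vscal_1; reflexivity.
Qed.

Lemma opp_add (E : Banach) (x y : E) : vopp (vadd x y) = vadd (vopp x) (vopp y).
Proof. rewrite !opp_scal, vscal_distr_v; reflexivity. Qed.

Lemma norm0 (E : Banach) : vnorm (@vzero E) = 0.
Proof. rewrite <- (scal0 E vzero), vnorm_scal, Rabs_R0, Rmult_0_l; reflexivity. Qed.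

Lemma norm_opp (E : Banach) (x : E) : vnorm (vopp x) = vnorm x.
Proof. rewrite opp_scal, vnorm_scal. replace (Rabs (-1)) with 1 by (rewrite Rabs_left; lra). ring. Qed.

Lemma norm_ge0 (E : Banach) (x : E) : 0 <= vnorm x.
Proof.
  pose proof (vnorm_triangle E x (vopp x)) as H.
  rewrite vadd_opp, norm0, norm_opp in H. lra.
Qed.

Lemma sub_eq0 (E : Banach) (x y : E) : vadd x (vopp y) = vzero -> x = y.
Proof.
  intro H. rewrite <- (vadd_0 E x), <- (oppl E y), vadd_assoc, H, add0l. reflexivity.
Qed.

Lemma shift1 (E : Banach) (x z : E) c : vadd x (vopp (vadd x (vscal c z))) = vscal (-c) z.
Proof.
  rewrite opp_add, vadd_assoc, vadd_opp, add0l, opp_scal, vscal_assoc.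
  f_equal; ring.
Qed.

Lemma shift2 (E : Banach) (x y z : E) c :
  vadd (vadd x (vscal c z)) (vopp y) = vadd (vadd x (vopp y)) (vscal c z).
Proof.
  rewrite <- !vadd_assoc, (vadd_comm _ (vscal c z)). reflexivity.
Qed.

Lemma tele (E : Banach) (a b c : E) :
  vadd (vadd a (vopp c)) (vadd c (vopp b)) = vadd a (vopp b).
Proof. rewrite <- vadd_assoc, (vadd_assoc _ (vopp c)), oppl, add0l. reflexivity. Qed.

Lemma dist_self (E : Banach) (x : E) : vdist x x = 0.
Proof. unfold vdist; rewrite vadd_opp; apply norm0. Qed.

Lemma add_scal_self (E : Banach) (b : E) c : vadd b (vscal c b) = vscal (1 + c) b.
Proof.
  transitivity (vadd (vscal 1 b) (vscal c b)).
  - rewrite vscal_1; reflexivity.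
  - rewrite <- vscal_distr_s; reflexivity.
Qed.

Lemma norm_sub_le (E : Banach) (a e : E) s t :
  vnorm (vadd a (vscal (-t) e)) <= vnorm (vadd a (vscal (-s) e)) + Rabs (s - t) * vnorm e.
Proof.
  replace (vadd a (vscal (-t) e)) with (vadd (vadd a (vscal (-s) e)) (vscal (s - t) e)).
  - rewrite <- vnorm_scal. apply vnorm_triangle.
  - rewrite <- vadd_assoc, <- vscal_distr_s. f_equal. f_equal. ring.
Qed.

Lemma sum_pos (X Y : Banach) (u v : X * Y) : u <> v -> 0 < sum_inf_dist u v.
Proof.
  destruct u as [x1 y1], v as [x2 y2]. intro Huv. unfold sum_inf_dist, vdist; simpl.
  pose proof (norm_ge0 X (vadd x1 (vopp x2))).
  pose proof (norm_ge0 Y (vadd y1 (vopp y2))).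
  destruct (Req_dec (vnorm (vadd x1 (vopp x2))) 0) as [H1|H1].
  - destruct (Req_dec (vnorm (vadd y1 (vopp y2))) 0) as [H2|H2].
    + exfalso. apply Huv. apply vnorm_eq0, sub_eq0 in H1. apply vnorm_eq0, sub_eq0 in H2.
      subst; reflexivity.
    + eapply Rlt_le_trans; [|apply Rmax_r]. lra.
  - eapply Rlt_le_trans; [|apply Rmax_l]. lra.
Qed.

Theorem lemma4p2 (X Y Z : Banach) (T : X * Y -> Z)
  (hX : exists x : X, x <> vzero)
  (hT : lipschitz T) (hT0 : T sum_inf_zero = vzero)
  (L : R) (hL : lip_norm_is T L) :
  forall eps, 0 < eps ->
  exists u v : X * Y, u <> v /\
    sum_inf_dist u v = vdist (fst u) (fst v) /\
    vdist (T u) (T v) >= (L - eps) * sum_inf_dist u v.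
Proof.
  intros eps Heps.
  destruct hL as [Hub Hleast].
  assert (Hex : exists u v : X * Y, u <> v /\
            vdist (T u) (T v) > (L - eps) * sum_inf_dist u v).
  { apply NNPP; intro Hn.
    assert (L <= L - eps); [|lra].
    apply Hleast. intros r [u [v [Huv Hr]]].
    destruct (Rle_dec r (L - eps)) as [Hle|Hgt]; [exact Hle|].
    exfalso; apply Hn. exists u, v. split; [exact Huv|].
    pose proof (sum_pos X Y u v Huv) as HS.
    assert (Heq : vdist (T u) (T v) = r * sum_inf_dist u v)
      by (rewrite Hr; field; lra).
    rewrite Heq. apply Rmult_lt_compat_r; lra. }
  destruct Hex as [[x1 y1] [[x2 y2] [Huv HT]]].
  destruct (Rle_dec (vdist y1 y2) (vdist x1 x2)) as [Hxy|Hxy].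
  { exists (x1, y1), (x2, y2). split; [exact Huv|]. split.
    - unfold sum_inf_dist; simpl; apply Rmax_left; exact Hxy.
    - lra. }
  apply Rnot_le_lt in Hxy.
  set (a := vadd x1 (vopp x2)).
  set (b := vadd y1 (vopp y2)).
  set (d := vdist y1 y2).
  assert (Hna : vnorm a < d) by exact Hxy.
  assert (Hnb : vnorm b = d) by reflexivity.
  assert (Ha0 : 0 <= vnorm a) by apply norm_ge0.
  destruct hX as [e0 He0].
  set (c := vnorm e0).
  assert (Hc : 0 < c).
  { destruct (norm_ge0 X e0) as [H|H]; [exact H|].
    exfalso; apply He0, vnorm_eq0; symmetry; exact H. }
  set (e := vscal (/ c) e0).
  assert (He1 : vnorm e = 1).
  { unfold e; rewrite vnorm_scal, Rabs_right.
    - fold c; field; lra.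
    - left; apply Rinv_0_lt_compat; exact Hc. }
  set (h := fun t => vnorm (vadd a (vscal (-t) e))).
  assert (Hh : forall s t, Rabs (h t - h s) <= Rabs (t - s)).
  { intros s t. unfold h. apply Rabs_le. split.
    - pose proof (norm_sub_le X a e t s) as H1. rewrite He1 in H1. lra.
    - pose proof (norm_sub_le X a e s t) as H1. rewrite He1, Rabs_minus_sym in H1. lra. }
  set (f := fun t => t + h t - d).
  assert (Hcont : continuity f).
  { intros x0. unfold continuity_pt, continue_in, limit1_in, limit_in.
    intros eps' Heps'. exists (eps' / 2). split; [lra|].
    intros x [_ Hx]. simpl in *. unfold R_dist in *.
    unfold f.
    replace (x + h x - d - (x0 + h x0 - d)) with ((x - x0) + (h x - h x0)) by ring.
    pose proof (Rabs_triang (x - x0) (h x - h x0)).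
    pose proof (Hh x0 x). lra. }
  assert (Hh0 : h 0 = vnorm a).
  { unfold h. rewrite Ropp_0, scal0, vadd_0. reflexivity. }
  assert (Hd : 0 < d) by lra.
  assert (Hhd : 0 < h d).
  { destruct (norm_ge0 X (vadd a (vscal (-d) e))) as [H|H]; [exact H|].
    exfalso. symmetry in H. apply vnorm_eq0 in H.
    replace (vscal (-d) e) with (vopp (vscal d e)) in H
      by (rewrite opp_scal, vscal_assoc; f_equal; ring).
    apply sub_eq0 in H. rewrite H, vnorm_scal, He1, Rabs_right in Hna; lra. }
  destruct (IVT f 0 d Hcont Hd) as [t [[Ht0 Htd] Hft]].
  { unfold f; rewrite Hh0; lra. }
  { unfold f; lra. }
  assert (Htpos : 0 < t).
  { destruct Ht0 as [H|H]; [exact H|]. subst t. unfold f in Hft. rewrite Hh0 in Hft. lra. }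
  assert (Htlt : t < d).
  { destruct Htd as [H|H]; [exact H|]. subst t. unfold f in Hft. lra. }
  assert (Hht : h t = d - t) by (unfold f in Hft; lra).
  set (s := t / d).
  set (xw := vadd x1 (vscal (-t) e)).
  set (yw := vadd y1 (vscal (-s) b)).
  assert (Dxuw : vdist x1 xw = t).
  { unfold vdist, xw. rewrite shift1, vnorm_scal, He1, Ropp_involutive, Rabs_right; lra. }
  assert (Dyuw : vdist y1 yw = t).
  { unfold vdist, yw. rewrite shift1, vnorm_scal, Hnb, Ropp_involutive, Rabs_right.
    - unfold s; field; lra.
    - unfold s; left; apply Rdiv_lt_0_compat; lra. }
  assert (Dxwv : vdist xw x2 = d - t).
  { unfold vdist, xw. rewrite shift2. exact Hht. }
  assert (Dywv : vdist yw y2 = d - t).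
  { unfold vdist, yw. rewrite shift2. fold b. rewrite add_scal_self, vnorm_scal, Hnb.
    rewrite Rabs_right.
    - unfold s; field; lra.
    - assert (t / d < 1).
      { apply (Rmult_lt_reg_r d); [lra|]. unfold Rdiv. rewrite Rmult_assoc, Rinv_l; lra. }
      unfold s; lra. }
  assert (Suw : sum_inf_dist (x1, y1) (xw, yw) = t).
  { unfold sum_inf_dist; simpl. rewrite Dxuw, Dyuw. apply Rmax_left; lra. }
  assert (Swv : sum_inf_dist (xw, yw) (x2, y2) = d - t).
  { unfold sum_inf_dist; simpl. rewrite Dxwv, Dywv. apply Rmax_left; lra. }
  assert (Suv : sum_inf_dist (x1, y1) (x2, y2) = d).
  { unfold sum_inf_dist; simpl. apply Rmax_right. change (vnorm a <= d). lra. }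
  destruct (Rge_dec (vdist (T (x1, y1)) (T (xw, yw))) ((L - eps) * t)) as [G1|G1].
  { exists (x1, y1), (xw, yw). split.
    - intro H. injection H as H1 H2. rewrite <- H1, dist_self in Dxuw. lra.
    - simpl. rewrite Suw, Dxuw. split; [reflexivity|exact G1]. }
  destruct (Rge_dec (vdist (T (xw, yw)) (T (x2, y2))) ((L - eps) * (d - t))) as [G2|G2].
  { exists (xw, yw), (x2, y2). split.
    - intro H. injection H as H1 H2. rewrite H1, dist_self in Dxwv. lra.
    - simpl. rewrite Swv, Dxwv. split; [reflexivity|exact G2]. }
  exfalso.
  pose proof (vnorm_triangle Z (vadd (T (x1, y1)) (vopp (T (xw, yw))))
                               (vadd (T (xw, yw)) (vopp (T (x2, y2))))) as Htri.
  rewrite tele in Htri.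
  unfold vdist in HT, G1, G2. rewrite Suv in HT.
  assert ((L - eps) * t + (L - eps) * (d - t) = (L - eps) * d) by ring.
  apply Rnot_ge_lt in G1; apply Rnot_ge_lt in G2. lra.
Qed.
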